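(* There is a family $\mathcal{H}$ of countably infinite $G_\delta$-subsets of the Euclidean real line $\mathbb{R}$ such that $|\mathcal{H}|=\mathfrak{c}$ and any two distinct members of $\mathcal{H}$ are non-homeomorphic as subspaces of $\mathbb{R}$.
   Context: $\mathfrak{c}=|\mathbb{R}|$. *)

(* Defs.v *)
From HB Require Import structures.
From mathcomp Require Import all_boot all_order all_algebra.
From mathcomp Require Import all_classical all_reals all_analysis.
Set Implicit Arguments. Unset Strict Implicit. Unset Printing Implicit Defensive.
Import Order.TTheory GRing.Theory Num.Theory.
Import numFieldTopology.Exports numFieldNormedType.Exports.
Local Open Scope classical_set_scope.
Local Open Scope ring_scope.

Definition Gdelta (R : realType) (A : set R) : Prop :=
  exists U : nat -> set R, (forall n, open (U n)) /\ A = \bigcap_n U n.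

Definition countably_infinite (T : Type) (A : set T) : Prop :=
  countable A /\ infinite_set A.

Definition homeomorphic_subspaces (R : realType) (A B : set R) : Prop :=
  exists f g : R -> R,
    [/\ set_fun A B f, set_fun B A g,
        {in A, cancel f g}, {in B, cancel g f} &
        {within A, continuous f} /\ {within B, continuous g}].

(* Main.v *)
Require Import Defs.
From HB Require Import structures.
From mathcomp Require Import all_boot all_order all_algebra.
From mathcomp Require Import all_classical all_reals all_analysis.
From mathcomp Require Import ring lra.
Import Order.TTheory GRing.Theory Num.Theory.
Import numFieldTopology.Exports numFieldNormedType.Exports.
Local Open Scope classical_set_scope.
Local Open Scope card_scope.
Set Implicit Arguments. Unset Strict Implicit.

Section Gen.
Local Open Scope ring_scope.
Variable R : realType.
Implicit Types (A B : set R) (x y : R).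

Definition limpt A x := forall e : R, 0 < e -> exists a, [/\ A a, a <> x & `|a - x| < e].
Definition der A := [set x | A x /\ limpt A x].
Definition D A n := iter n der A.
Definition ctn A (f : R -> R) := forall x, A x -> forall e : R, 0 < e ->
  exists2 d : R, 0 < d & forall a, A a -> `|a - x| < d -> `|f a - f x| < e.
Definition hom A B f g := [/\ (forall x, A x -> B (f x)), (forall y, B y -> A (g y)),
  (forall x, A x -> g (f x) = x), (forall y, B y -> f (g y) = y) & ctn A f /\ ctn B g].
Definition myopen A := forall x, A x -> exists2 e : R, 0 < e & forall y, `|y - x| < e -> A y.
Definition myclosed A := forall y, (forall e : R, 0 < e -> exists a, A a /\ `|a - y| < e) -> A y.
Definition bad A p := forall e : R, 0 < e -> exists Z : set R,
  [/\ (forall z, Z z -> A z /\ `|z - p| < e), infinite_set Z & forall x, A x -> ~ limpt Z x].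
Definition Pm m A := exists p, [/\ A p, bad A p, D A m p & ~ D A m.+1 p].

Lemma within_ctn A f : {within A, continuous f} -> ctn A f.
Proof.
rewrite continuous_subspace_in => cf x Ax e e0.
have := cf x (mem_set Ax). rewrite /continuous_at.
move=> /cvgrPdist_lt /(_ e e0).
rewrite /prop_near1 /= -[nbhs (x : subspace A)]/(nbhs_subspace x) -nbhs_subspace_in //.
rewrite /within /= => /nbhs_ballP [d /= d0 H].
exists d => // a Aa ad. rewrite distrC. apply: H => //=.
by rewrite /ball /= distrC.
Qed.

Lemma homeo_hom A B : homeomorphic_subspaces A B -> exists f g, hom A B f g.
Proof.
move=> [f [g [fAB gBA fK gK [cf cg]]]]; exists f, g; split.
- by move=> x Ax; exact: fAB.
- by move=> y By; exact: gBA.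
- by move=> x Ax; apply: fK; rewrite inE.
- by move=> y By; apply: gK; rewrite inE.
- by split; apply: within_ctn.
Qed.

Lemma hom_sym A B f g : hom A B f g -> hom B A g f.
Proof. by move=> [h1 h2 h3 h4 [h5 h6]]; split. Qed.

Lemma ctn_sub A B f : B `<=` A -> ctn A f -> ctn B f.
Proof.
move=> BA cf x Bx e e0; have [d d0 H] := cf x (BA _ Bx) e e0.
by exists d => // a Ba; apply: H; apply: BA.
Qed.

Lemma der_sub A : der A `<=` A. Proof. by move=> x []. Qed.

Lemma D_sub A n : D A n.+1 `<=` D A n. Proof. exact: der_sub. Qed.

Lemma D_mono A k n : (k <= n)%N -> D A n `<=` D A k.
Proof.
move=> /subnK <-; elim: (n - k)%N => [|i IH] //= x /D_sub.
by rewrite -/(D A (i + k)) => /IH.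
Qed.

Lemma D_subA A n : D A n `<=` A.
Proof. by move=> x; have := @D_mono A 0 n (leq0n _); apply. Qed.

Lemma limpt_hom A B f g x : hom A B f g -> A x -> limpt A x -> limpt B (f x).
Proof.
move=> [fAB _ fK _ [cf _]] Ax lx e e0.
have [d d0 H] := cf x Ax e e0.
have [a [Aa ax ad]] := lx d d0.
exists (f a); split; [exact: fAB| |exact: H].
by move=> fafx; apply: ax; rewrite -(fK a Aa) fafx fK.
Qed.

Lemma hom_der A B f g : hom A B f g -> hom (der A) (der B) f g.
Proof.
move=> hAB; have hBA := hom_sym hAB.
case: (hAB) => [fAB gBA fK gK [cf cg]]; split.
- by move=> x [Ax lx]; split; [exact: fAB | exact: limpt_hom hAB Ax lx].
- by move=> y [By ly]; split; [exact: gBA | exact: limpt_hom hBA By ly].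
- by move=> x [Ax _]; exact: fK.
- by move=> y [By _]; exact: gK.
- by split; apply: ctn_sub (@der_sub _) _.
Qed.

Lemma hom_D A B f g n : hom A B f g -> hom (D A n) (D B n) f g.
Proof. by move=> h; elim: n => [|n IH] //=; apply: hom_der. Qed.

Lemma hom_bad A B f g p : hom A B f g -> A p -> bad A p -> bad B (f p).
Proof.
move=> hAB Ap bp e e0.
case: (hAB) => [fAB gBA fK gK [cf cg]].
have [d d0 H] := cf p Ap e e0.
have [Z [ZA Zinf Zno]] := bp d d0.
exists (f @` Z); split.
- move=> _ [z Zz <-]; have [Az zd] := ZA z Zz; split; first exact: fAB.
  exact: H.
- move=> fin; apply: Zinf.
  have -> : Z = g @` (f @` Z).
    apply/seteqP; split=> [z Zz|_ [_ [z Zz <-] <-]]; last by rewrite fK //; case: (ZA z Zz).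
    by exists (f z); [exists z | rewrite fK //; case: (ZA z Zz)].
  exact: finite_image.
- move=> y By ly; apply: (Zno (g y) (gBA y By)) => e' e'0.
  have [d' d'0 H'] := cg y By e' e'0.
  have [_ [[z Zz <-] fzy fzd]] := ly d' d'0.
  have Az : A z by case: (ZA z Zz).
  exists z; split => //.
    by move=> zgy; apply: fzy; rewrite zgy gK.
  by have := H' (f z) (fAB _ Az) fzd; rewrite fK.
Qed.

Lemma hom_Pm A B f g m : hom A B f g -> Pm m A -> Pm m B.
Proof.
move=> hAB [p [Ap bp Dp nDp]].
case: (hAB) => [fAB gBA fK gK _].
exists (f p); split.
- exact: fAB.
- exact: hom_bad hAB Ap bp.
- by case: (hom_D m hAB) => + _ _ _ _; apply.
- move=> Dfp; apply: nDp; case: (hom_D m.+1 (hom_sym hAB)) => + _ _ _ _.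
  by move=> /(_ _ Dfp); rewrite fK.
Qed.

Lemma der_loc A A' V : myopen V -> (forall y, A' y <-> A y /\ V y) ->
  forall y, der A' y <-> der A y /\ V y.
Proof.
move=> oV hA y; split.
- move=> [/hA [Ay Vy] ly]; split=> //; split=> // e e0.
  have [a [/hA [Aa _] ay ad]] := ly e e0; by exists a.
- move=> [[Ay ly] Vy]; split; first exact/hA.
  move=> e e0; have [r r0 Hr] := oV y Vy.
  have [a [Aa ay ad]] := ly (Num.min e r) (ltac:(by rewrite lt_min e0 r0)).
  exists a; split=> //.
    by apply/hA; split=> //; apply: Hr; move: ad; rewrite lt_min => /andP[].
  by move: ad; rewrite lt_min => /andP[].
Qed.

Lemma D_loc A V n : myopen V -> forall y, D (A `&` V) n y <-> D A n y /\ V y.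
Proof.
move=> oV; elim: n => [|n IH] //= y.
exact: der_loc.
Qed.

Lemma D_ext A B n : (forall y, A y <-> B y) -> D A n = D B n.
Proof.
by move=> h; have -> // : A = B; apply/funext => y; apply/propext.
Qed.

Definition aff (a b x : R) := a + b * x.

Lemma affK a b y : b != 0 -> aff a b ((y - a) / b) = y.
Proof. by move=> b0; rewrite /aff [b * _]mulrC divfK // addrC subrK. Qed.
Lemma affK2 a b x : b != 0 -> (aff a b x - a) / b = x.
Proof. by move=> b0; rewrite /aff addrC addKr mulrC mulKf. Qed.

Lemma hom_aff A a b : b != 0 -> hom A (aff a b @` A) (aff a b) (fun y => (y - a) / b).
Proof.
move=> b0; have iK : forall x, (aff a b x - a) / b = x.
  by move=> x; rewrite /aff addrC addKr mulrC mulKf.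
split.
- by move=> x Ax; exists x.
- by move=> _ [x Ax <-]; rewrite iK.
- by move=> x _; exact: iK.
- by move=> y _; rewrite /aff mulrC divfK // addrC subrK.
- split.
  + move=> x _ e e0; exists (e / `|b|); first by rewrite divr_gt0 // normr_gt0.
    move=> y _ yx; rewrite /aff opprD addrACA subrr add0r -mulrBr normrM.
    by rewrite mulrC -ltr_pdivlMr // normr_gt0.
  + move=> x _ e e0; exists (e * `|b|); first by rewrite mulr_gt0 // normr_gt0.
    move=> y _ yx; rewrite -mulrBl opprB addrA subrK normrM normfV.
    by rewrite ltr_pdivrMr // normr_gt0.
Qed.

Lemma D_aff A a b n x : b != 0 -> D (aff a b @` A) n (aff a b x) <-> D A n x.
Proof.
move=> b0; case: (hom_D n (hom_aff A a b0)) => h1 h2 h3 h4 _.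
split; last exact: h1.
move=> /h2; rewrite /aff addrC addKr mulrC mulKf //.
Qed.

Lemma D_affE A a b n y : b != 0 -> D (aff a b @` A) n y <-> D A n ((y - a) / b).
Proof.
move=> b0; have {1}-> : y = aff a b ((y - a) / b).
  by rewrite /aff [b * _]mulrC divfK // addrC subrK.
exact: D_aff.
Qed.

Lemma limpt_aff Z a b y : b != 0 -> limpt (aff a b @` Z) y -> limpt Z ((y - a) / b).
Proof.
move=> b0 ly e e0.
have nb : 0 < `|b| by rewrite normr_gt0.
have [_ [[z Zz <-] zy zd]] := ly (e * `|b|) (mulr_gt0 e0 nb).
exists z; split => //.
  by move=> zE; apply: zy; rewrite zE /aff [b * _]mulrC divfK // addrC subrK.
rewrite -(ltr_pM2r nb) -normrM mulrBl divfK //.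
move: zd; rewrite /aff; congr (_ < _); congr `|_|; ring.
Qed.

Lemma myopen_open V : myopen V -> open V.
Proof.
move=> H; rewrite openE => x Vx. have [e e0 He] := H x Vx.
rewrite /interior; apply/nbhs_ballP; exists e => //= y; rewrite /ball /= distrC; exact: He.
Qed.



Definition w (j : nat) : R := (2^-1) ^+ j.

Lemma w_gt0 j : 0 < w j. Proof. by rewrite exprn_gt0. Qed.
Lemma wS j : w j.+1 = w j / 2. Proof. by rewrite /w exprSr. Qed.
Lemma w0 : w 0 = 1. Proof. by []. Qed.
Lemma w_le i j : (i <= j)%N -> w j <= w i.
Proof.
move=> /subnK <-; elim: (j - i)%N => [|k IH] //=.
rewrite addSn wS; have := w_gt0 (k + i); lra.
Qed.
Lemma w_le1 j : w j <= 1. Proof. by rewrite -w0 w_le. Qed.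
Lemma w_lt i j : (i < j)%N -> w j <= w i / 2.
Proof. by move=> /w_le; rewrite wS. Qed.
Lemma w_nat j : j.+1%:R * w j <= 1.
Proof.
elim: j => [|j IH]; first by rewrite w0 mulr1.
rewrite wS -[j.+2]addn1 natrD.
have h := w_gt0 j.
have h2 : 1 <= j.+1%:R :> R by rewrite ler1n.
nra.
Qed.
Lemma w_small (e : R) : 0 < e -> exists j, w j < e.
Proof.
move=> e0; exists (Num.truncn e^-1).
have h := truncnS_gt e^-1; set n := (Num.truncn e^-1).+1 in h *.
have hw := w_nat (Num.truncn e^-1); rewrite -/n in hw.
have hn : 0 < n%:R :> R by rewrite ltr0n.
have : 1 < e * n%:R by rewrite -ltr_pdivrMl // mulrC mul1r.
have := w_gt0 (Num.truncn e^-1); nra.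
Qed.

Definition T j x := w j * (2^-1 + x / 4).
Definition s j := T j 0.

Lemma sE j : s j = w j / 2. Proof. by rewrite /s /T mul0r addr0. Qed.

Fixpoint K (m : nat) : set R :=
  match m with
  | 0 => [set 0]
  | m'.+1 => [set x | x = 0 \/ exists j, exists2 y, K m' y & x = T j y]
  end.

Lemma K0 m : K m 0. Proof. by case: m => [|m] //=; left. Qed.

Lemma K_bnd m x : K m x -> 0 <= x <= 3 / 4.
Proof.
elim: m x => [|m IH] x /=; first by move=> ->; lra.
case=> [->|[j [y /IH hy ->]]]; first lra.
rewrite /T; have := w_gt0 j; have := w_le1 j; nra.
Qed.

Lemma T_bnd j y : 0 <= y <= 3 / 4 -> w j / 2 <= T j y <= w j * (11 / 16).
Proof. rewrite /T; have := w_gt0 j; nra. Qed.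

Definition V j := [set x | w j * (3 / 8) < x < w j * (7 / 8)].

Lemma T_V j y : 0 <= y <= 3 / 4 -> V j (T j y).
Proof. move=> /(T_bnd j) /andP[h1 h2]; rewrite /V /=; have := w_gt0 j; move=> h.
apply/andP; split; lra. Qed.

Lemma T_Vn i j y : 0 <= y <= 3 / 4 -> V j (T i y) -> i = j.
Proof.
move=> /(T_bnd i) /andP[h1 h2] /andP[h3 h4].
have := w_gt0 i; have := w_gt0 j => wj wi.
case: (ltngtP i j) => // hij; exfalso.
- have := w_lt hij; clear hij; lra.
- have := w_lt hij; clear hij; lra.
Qed.

Lemma K_V m j x : V j x -> (K m.+1 x <-> exists2 y, K m y & x = T j y).
Proof.
move=> Vx; split.
- case=> [x0|[i [y Ky xE]]]; first by move: Vx; rewrite /V x0 /=; have := w_gt0 j; lra.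
  exists y => //; rewrite xE; congr T; apply: (T_Vn (K_bnd Ky)); rewrite -xE.
  exact: Vx.
- by move=> [y Ky ->]; right; exists j, y.
Qed.

Lemma K_piece m x : K m.+1 x -> x <> 0 -> exists j, V j x.
Proof.
by case=> // [[j [y Ky ->]]] _; exists j; apply: T_V; exact: K_bnd Ky.
Qed.

Lemma V_open j : myopen (V j).
Proof.
move=> x /= Vx; exists (Num.min (x - w j * (3/8)) (w j * (7/8) - x)).
  move: Vx => /andP[e f]; rewrite lt_min; apply/andP; split; lra.
move=> y; rewrite lt_min => /andP[h1 h2]; move: h1 h2.
rewrite !ltr_distl => /andP[a b] /andP[c d]; move: Vx => /andP[e f].
rewrite /V /=; apply/andP; split; lra.
Qed.



Lemma T_aff j : T j = aff (w j / 2) (w j / 4).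
Proof. by apply/funext => x; rewrite /T /aff; ring. Qed.

Lemma aff_ne0 j : w j / 4 != 0.
Proof. by rewrite mulf_neq0 // ?invr_eq0 // gt_eqF ?w_gt0. Qed.

Lemma T_inj j : injective (T j).
Proof.
move=> x y h.
have e : w j / 4 * (x - y) = 0.
  by rewrite -[RHS](subrr (T j x)) {2}h /T; ring.
by move/eqP: e; rewrite mulf_eq0 (negbTE (aff_ne0 j)) /= subr_eq0 => /eqP.
Qed.

Lemma Kpiece_set m j : K m.+1 `&` V j = T j @` K m.
Proof.
apply/seteqP; split.
- by move=> x [Kx Vx]; have [y Ky ->] := (K_V m Vx).1 Kx; exists y.
- move=> _ [y Ky <-]; have Vy := T_V j (K_bnd Ky); split=> //.
  by apply/(K_V m Vy); exists y.
Qed.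

Lemma D_piece m j r x : V j x -> (D (K m.+1) r x <-> exists2 y, D (K m) r y & x = T j y).
Proof.
move=> Vx.
have h : D (K m.+1) r x <-> D (K m.+1 `&` V j) r x.
  by rewrite (@D_loc (K m.+1) (V j) r (V_open (j:=j)) x); split=> [?|[]//]; split.
rewrite h Kpiece_set T_aff D_affE ?aff_ne0 //; split.
- move=> hd; eexists; first exact: hd.
  by rewrite affK ?aff_ne0.
- by move=> [y Dy ->]; rewrite affK2 ?aff_ne0.
Qed.


Lemma s_gt0 j : 0 < s j. Proof. by rewrite sE divr_gt0 // w_gt0. Qed.
Lemma s_bnd j : 0 <= s j <= 3 / 4.
Proof. by apply: (K_bnd (m := 1)); right; exists j, 0. Qed.
Lemma s_V j : V j (s j). Proof. exact: T_V (K_bnd (K0 0)). Qed.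
Lemma s_Vn j k : V j (s k) -> k = j.
Proof. exact: T_Vn (K_bnd (K0 0)). Qed.

Lemma limpt_sub0 A x : (forall a, A a -> a = x) -> ~ limpt A x.
Proof. by move=> h /(_ 1 ltr01) [a [/h ax ax' _]]. Qed.

Lemma K_topr m r : (r <= m)%N -> D (K m) r 0.
Proof.
elim: m r => [|m IHm] r; first by rewrite leqn0 => /eqP ->; exact: K0.
elim: r => [|r IHr] hr; first exact: K0.
split; first by apply: IHr; exact: ltnW.
move=> e e0; have [j wj] := w_small e0.
exists (s j); split.
- apply/(D_piece m r (s_V j)); exists 0 => //; exact: IHm.
- by have := s_gt0 j; rewrite lt0r => /andP[/eqP].
- by rewrite subr0 gtr0_norm ?s_gt0 // sE; have := w_gt0 j; lra.
Qed.

Lemma K_rank m x : D (K m) m x -> x = 0.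
Proof.
elim: m x => [|m IH] x; first by [].
move=> Dx; have Kx := D_subA Dx.
have [->//|/eqP x0] := eqVneq x 0.
have [j Vj] := K_piece Kx x0.
have [y [Dy ly] xE] := (D_piece m m.+1 Vj).1 Dx.
have y0 := IH y Dy; rewrite y0 in ly.
by exfalso; apply: (limpt_sub0 (IH) ly).
Qed.

Definition G n := [set x | K n.+1 x /\ forall j, x <> s j].
Definition O j := [set x | V j x /\ x <> s j].

Lemma O_open j : myopen (O j).
Proof.
move=> x [Vx xs]; have [e1 e10 H1] := V_open Vx.
have e20 : 0 < `|x - s j| by rewrite normr_gt0 subr_eq0; apply/eqP.
exists (Num.min e1 `|x - s j|); first by rewrite lt_min e10 e20.
move=> y; rewrite lt_min => /andP[h1 h2]; split; first exact: H1.
move=> ys; move: h2; rewrite ys -normrN opprB; lra.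
Qed.

Lemma G_O n j x : O j x -> (G n x <-> K n.+1 x).
Proof.
move=> [Vx xs]; split; first by case.
move=> Kx; split=> // k xk; apply: xs; rewrite xk in Vx *.
by rewrite (s_Vn Vx).
Qed.

Lemma DG_O n r j x : O j x -> (D (G n) r x <-> D (K n.+1) r x).
Proof.
move=> Ox.
have h1 := @D_loc (G n) (O j) r (@O_open j) x.
have h2 := @D_loc (K n.+1) (O j) r (@O_open j) x.
have e : G n `&` O j = K n.+1 `&` O j.
  apply/seteqP; split=> y [Gy Oy]; split=> //; exact/(G_O n Oy).
rewrite e in h1; split.
- by move=> Dx; have /h2[] : D (K n.+1 `&` O j) r x by apply/h1.
- by move=> Dx; have /h1[] : D (K n.+1 `&` O j) r x by apply/h2.
Qed.

Lemma G0 n : G n 0.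
Proof. by split; [exact: K0 | move=> j /esym; apply/eqP; rewrite gt_eqF ?s_gt0]. Qed.

Lemma G_bnd n x : G n x -> 0 <= x <= 3 / 4.
Proof. by move=> [/K_bnd]. Qed.

Lemma Ts_pos j i : 0 < T j (s i).
Proof. have /andP[h _] := T_bnd j (s_bnd i); have := w_gt0 j; lra. Qed.

Lemma Ts_O j i : O j (T j (s i)).
Proof.
split; first exact: T_V (s_bnd i).
rewrite /s => /T_inj; apply/eqP; rewrite -/(s i) gt_eqF ?s_gt0 //.
Qed.

Lemma Ts_small j i : T j (s i) <= w j.
Proof. have /andP[_ h] := T_bnd j (s_bnd i); have := w_gt0 j; lra. Qed.

Lemma Ts_K n j i : K n.+2 (T j (s i)).
Proof. by right; exists j, (s i) => //; right; exists i, 0 => //; exact: K0. Qed.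

Lemma Ts_G n j i : G n.+1 (T j (s i)).
Proof. exact/(G_O n.+1 (Ts_O j i))/Ts_K. Qed.

Lemma DG_top n : D (G n.+1) n.+1 0.
Proof.
have : forall r, (r <= n.+1)%N -> D (G n.+1) r 0.
  elim=> [|r IHr] hr; first exact: G0.
  split; first by apply: IHr; exact: ltnW.
  move=> e e0; have [j wj] := w_small e0.
  exists (T j (s 0)); split.
  - apply/(DG_O n.+1 r (Ts_O j 0)).
    apply/(D_piece n.+1 r (T_V j (s_bnd 0))); exists (s 0) => //.
    apply/(D_piece n r (s_V 0)); exists 0 => //.
    by apply: K_topr.
  - by apply/eqP; rewrite gt_eqF ?Ts_pos.
  - by rewrite subr0 gtr0_norm ?Ts_pos //; have := Ts_small j 0; lra.
by apply.
Qed.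

Lemma DG_rank n a : D (G n) n a -> a = 0.
Proof.
move=> Da; have [Ka as_] := D_subA Da.
have [->//|/eqP a0] := eqVneq a 0.
have [j Vj] := K_piece Ka a0.
have Oa : O j a by split.
have /(D_piece n n Vj) [y Dy aE] := (DG_O n n Oa).1 Da.
by exfalso; apply: (as_ j); rewrite aE (K_rank Dy).
Qed.

Lemma DG_notop n : ~ D (G n) n.+1 0.
Proof. by move=> [_ ]; apply: limpt_sub0; exact: DG_rank. Qed.

Lemma cover y : 0 < y < 7 / 8 -> exists j, V j y.
Proof.
move=> /andP[y0 y1].
have ex : exists j, (w j * (7 / 8) <= y).
  have [j hj] := w_small y0; exists j; have := w_gt0 j; lra.
case: (ex_minnP ex) => j0 hj0 hmin.
have j0pos : (0 < j0)%N.
  by case: j0 hj0 hmin => // ; rewrite w0; lra.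
exists j0.-1; rewrite /V /=; apply/andP; split.
- have : w j0 = w j0.-1 / 2 by rewrite -wS prednK.
  have := w_gt0 j0; lra.
- rewrite ltNge; apply/negP => /hmin; rewrite -ltnS prednK // ltnn //.
Qed.

Lemma myclosed0 : myclosed [set 0].
Proof.
move=> y H; apply/eqP; apply/negPn/negP => y0.
have [a [-> ]] := H `|y| (ltac:(by rewrite normr_gt0)); rewrite sub0r normrN ltxx //.
Qed.

Lemma myclosed_aff A a b : b != 0 -> myclosed A -> myclosed (aff a b @` A).
Proof.
move=> b0 cA y H; exists ((y - a) / b); last exact: affK.
apply: cA => e e0.
have nb : 0 < `|b| by rewrite normr_gt0.
have [_ [[x Ax <-] hx]] := H (e * `|b|) (mulr_gt0 e0 nb).
exists x; split => //.
rewrite -(ltr_pM2r nb) -normrM mulrBl divfK //.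
by move: hx; rewrite /aff; congr (_ < _); congr `|_|; ring.
Qed.

Lemma myclosed_loc A B V y : myopen V -> V y -> (forall x, V x -> A x -> B x) -> myclosed B ->
  (forall e : R, 0 < e -> exists a, A a /\ `|a - y| < e) -> B y.
Proof.
move=> oV Vy AB cB H; apply: cB => e e0.
have [r r0 Hr] := oV y Vy.
have [a [Aa ha]] := H (Num.min e r) (ltac:(by rewrite lt_min e0 r0)).
move: ha; rewrite lt_min => /andP[h1 h2].
by exists a; split=> //; apply: AB => //; apply: Hr.
Qed.

Lemma K_closed m : myclosed (K m).
Proof.
elim: m => [|m IH]; first exact: myclosed0.
move=> y H.
have [->|/eqP y0] := eqVneq y 0; first by left.
have yge : 0 <= y.
  rewrite leNgt; apply/negP => yl.
  have [a [Ka ha]] := H (- y) (ltac:(lra)).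
  move: (K_bnd Ka) => /andP[a0 _]; move: ha; rewrite ger0_norm; lra.
have yle : y <= 3 / 4.
  rewrite leNgt; apply/negP => yl.
  have [a [Ka ha]] := H (y - 3 / 4) (ltac:(lra)).
  move: (K_bnd Ka) => /andP[_ a1]; move: ha; rewrite ltr0_norm; lra.
have [j Vy] : exists j, V j y.
  by apply: cover; apply/andP; split; [rewrite lt0r; apply/andP; split=> //; apply/eqP | lra].
have : (T j @` K m) y.
  apply: (myclosed_loc (V_open (j:=j)) Vy) H.
    by move=> x Vx Kx; rewrite -Kpiece_set.
  by rewrite T_aff; apply: myclosed_aff => //; exact: aff_ne0.
by move=> [x Kx <-]; right; exists j, x.
Qed.

Definition c n : R := (n.*2)%:R.
Definition I n := [set x | c n - 2^-1 < x < c n + 1].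
Definition X (S : nat -> Prop) := [set x | exists n, S n /\ G n (x - c n)].

Lemma I_uniq n k x : I n x -> I k x -> n = k.
Proof.
rewrite /I /c /= => /andP[a b] /andP[a' b'].
case: (ltngtP n k) => // h; exfalso.
- have : (n.*2 + 2)%:R <= (k.*2)%:R :> R by rewrite ler_nat addn2 -doubleS leq_double.
  rewrite natrD; lra.
- have : (k.*2 + 2)%:R <= (n.*2)%:R :> R by rewrite ler_nat addn2 -doubleS leq_double.
  rewrite natrD; lra.
Qed.

Lemma I_of n y : 0 <= y - c n <= 3 / 4 -> I n y.
Proof. by move=> /andP[a b]; rewrite /I /=; apply/andP; split; lra. Qed.

Lemma I_open n : myopen (I n).
Proof.
move=> x /andP[a b]; exists (Num.min (x - (c n - 2^-1)) (c n + 1 - x)).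
  by rewrite lt_min; apply/andP; split; lra.
move=> y; rewrite lt_min => /andP; rewrite !ltr_distl => -[/andP[p q] /andP[u v]].
rewrite /I /=; apply/andP; split; lra.
Qed.

Lemma XI S n x : I n x -> (X S x <-> S n /\ G n (x - c n)).
Proof.
move=> In; split; last by move=> h; exists n.
move=> [k [Sk Gk]]; have Ik := I_of (G_bnd Gk).
by rewrite (I_uniq In Ik).
Qed.

Lemma DX_I S n r x : S n -> I n x -> (D (X S) r x <-> D (G n) r (x - c n)).
Proof.
move=> Sn In.
have h1 := @D_loc (X S) (I n) r (@I_open n) x.
have e : X S `&` I n = aff (c n) 1 @` G n.
  apply/seteqP; split.
  - move=> y [Xy Iy]; have [_ Gy] := (XI S Iy).1 Xy.
    by exists (y - c n) => //; rewrite /aff mul1r addrC subrK.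
  - move=> _ [u Gu <-]; have hy : aff (c n) 1 u - c n = u by rewrite /aff mul1r addrC addKr.
    have Iy : I n (aff (c n) 1 u) by apply: I_of; rewrite hy; exact: (G_bnd Gu).
    by split=> //; apply/(XI S Iy); rewrite hy.
rewrite e D_affE ?oner_neq0 // divr1 in h1.
by split=> Dx; [apply/h1; split | have [] := h1.1 Dx].
Qed.

Lemma inf_img (f : nat -> R) : injective f -> infinite_set (f @` [set: nat]).
Proof.
move=> fi; apply/infiniteP.
have := @inj_card_eq _ _ [set: nat] f (in2W fi).
by move/card_eqPle => [].
Qed.

Lemma base_limpt y : limpt [set s i | i in [set: nat]] y -> y = 0.
Proof.
move=> ly; apply/eqP; apply/negPn/negP => y0.
have [yn|yp] := ltP y 0.
  have [_ [[i _ <-] _ h]] := ly (- y) (ltac:(lra)).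
  have := s_gt0 i; move: h; rewrite gtr0_norm; [lra | have := s_gt0 i; lra].
have ypos : 0 < y by rewrite lt0r y0.
have [_ [[i _ <-] si h1]] := ly (y / 4) (ltac:(lra)).
have d0 : 0 < `|s i - y| by rewrite normr_gt0 subr_eq0; apply/eqP.
have [_ [[k _ <-] sk h2]] := ly `|s i - y| d0.
have h3 : `|s k - y| < y / 4 by lra.
move: h1 h3; rewrite !ltr_distl => /andP[a b] /andP[a' b'].
case: (ltngtP i k) => hik.
- have := w_lt hik; rewrite !sE in a b a' b' *; have := w_gt0 i; lra.
- have := w_lt hik; rewrite !sE in a b a' b' *; have := w_gt0 k; lra.
- by move: h2; rewrite hik ltxx.
Qed.

Definition Zs n j := aff (c n) 1 @` (aff (w j / 2) (w j / 4) @` [set s i | i in [set: nat]]).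

Lemma w_neq0 j : w j != 0. Proof. by rewrite gt_eqF ?w_gt0. Qed.

Lemma Zs_limpt n j x : limpt (Zs n j) x -> x = c n + s j.
Proof.
move=> h.
have h1 : limpt _ _ := @limpt_aff _ _ _ _ (oner_neq0 R) h.
have h2 : limpt _ _ := @limpt_aff _ _ _ _ (aff_ne0 j) h1.
have := base_limpt h2; rewrite divr1 => /eqP; rewrite mulf_eq0 invr_eq0.
rewrite (negbTE (aff_ne0 j)) orbF subr_eq0 subr_eq => /eqP ->.
by rewrite sE addrC.
Qed.

Lemma bad_top S n : S n.+1 -> bad (X S) (c n.+1).
Proof.
move=> Sn e e0; have [j wj] := w_small e0.
exists (Zs n.+1 j); split.
- move=> _ [_ [_ [i _ <-] <-] <-]; rewrite -T_aff.
  have hz : aff (c n.+1) 1 (T j (s i)) - c n.+1 = T j (s i).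
    by rewrite /aff mul1r addrC addKr.
  split; first by exists n.+1; split=> //; rewrite hz; exact: Ts_G.
  rewrite /aff mul1r addrC addKr gtr0_norm ?Ts_pos //.
  by have := Ts_small j i; lra.
- have -> : Zs n.+1 j = (fun i => aff (c n.+1) 1 (T j (s i))) @` [set: nat].
    apply/seteqP; split.
    + by move=> _ [_ [_ [i _ <-] <-] <-]; exists i => //; rewrite T_aff.
    + by move=> _ [i _ <-]; exists (T j (s i)) => //; exists (s i); [exists i | rewrite T_aff].
  apply: inf_img => i k /(congr1 (fun z => z - c n.+1)).
  rewrite /aff !mul1r ![c _ + _]addrC !addrK => /T_inj.
  rewrite !sE => /(congr1 (fun z => z * 2)); rewrite !divfK // => wik.
  apply/eqP; apply/negP => /negP ne; have := w_gt0 i; have := w_gt0 k.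
  case: (ltngtP i k) ne => // hik _; have := w_lt hik; rewrite wik; lra.
- move=> x Xx /Zs_limpt xE.
  have Ix : I n.+1 x by apply: I_of; rewrite xE addrC addKr; exact: s_bnd.
  have [_ [_ Gs]] := (XI S Ix).1 Xx.
  by apply: (Gs j); rewrite xE addrC addKr.
Qed.

Lemma bnd_set (Z : set R) (M0 : R) : (forall z, Z z -> `|z| <= M0) -> bounded_set Z.
Proof.
move=> H; rewrite /= /bounded_near; near=> M => x Zx.
apply: (le_trans (H x Zx)); near: M; apply: nbhs_pinfty_ge; exact: num_real.
Unshelve. all: by end_near. Qed.

Lemma lp_limpt (Z : set R) z : limit_point Z z -> limpt Z z.
Proof.
move=> lp e e0; have [y [yz Zy By]] := lp (ball z e) (nbhsx_ballx z e e0).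
exists y; split => //; first exact/eqP.
by move: By; rewrite /ball /= distrC.
Qed.

Lemma good_loc A q C e : 0 < e -> myclosed C -> (forall y, `|y - q| < e -> (A y <-> C y)) ->
  ~ bad A q.
Proof.
move=> e0 cC hAC bq.
have [Z [ZA Zinf Zno]] := bq (e / 2) (ltac:(lra)).
have Zb : bounded_set Z.
  apply: (@bnd_set _ (`|q| + e)) => z /ZA [_ hz].
  have := ler_normD (z - q) q; rewrite subrK; lra.
have [z /lp_limpt lz] := infinite_bounded_limit_point_nonempty Zinf Zb.
have zq : `|z - q| <= e / 2.
  rewrite leNgt; apply/negP => zq.
  have [a [Za _ ha]] := lz (`|z - q| - e / 2) (ltac:(lra)).
  have [_ haq] := ZA a Za.
  have := ler_normD (z - a) (a - q); rewrite addrA subrK.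
  rewrite distrC in ha; lra.
have Cz : C z.
  apply: cC => e' e'0; have [a [Za _ ha]] := lz e' e'0.
  exists a; split => //; have [Aa ha'] := ZA a Za.
  by apply/hAC => //; lra.
have Az : A z by apply/hAC => //; lra.
exact: Zno Az lz.
Qed.

Lemma nontop_good S n p : S n -> I n p -> G n (p - c n) -> p - c n <> 0 -> ~ bad (X S) p.
Proof.
move=> Sn In [Ku us] u0.
have [j Vj] := K_piece Ku u0.
have Ou : O j (p - c n) by split.
have [e1 e10 H1] := O_open Ou.
have [e2 e20 H2] := I_open In.
have e0 : 0 < Num.min e1 e2 by rewrite lt_min e10 e20.
apply: (good_loc (C := aff (c n) 1 @` K n.+1) e0).
  by apply: myclosed_aff; [exact: oner_neq0 | exact: K_closed].
move=> y; rewrite lt_min => /andP[y1 y2].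
have Iy := H2 y y2.
have Oy : O j (y - c n) by apply: H1; rewrite opprB addrA subrK.
rewrite (XI S Iy) (G_O n Oy); split.
- move=> [_ Ky]; exists (y - c n) => //; rewrite /aff mul1r addrC subrK //.
- by move=> [x Kx <-]; split=> //; rewrite /aff mul1r addrC addKr.
Qed.

Lemma key S m : (forall n, S n -> (0 < n)%N) -> (Pm m.+1 (X S) <-> S m.+1).
Proof.
move=> HS; split.
- move=> [p [[n [Sn Gn]] bp Dp nDp]].
  have In := I_of (G_bnd Gn).
  have [u0|/eqP u0] := eqVneq (p - c n) 0; last by case: (nontop_good Sn In Gn u0).
  have hD : forall r, D (X S) r p <-> D (G n) r 0 by move=> r; rewrite -u0; exact: (DX_I r Sn In).
  move/hD: Dp => Dp; have {}nDp : ~ D (G n) m.+2 0 by move=> /hD /nDp.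
  have hn := HS _ Sn.
  case: n hn Sn Gn In u0 hD Dp nDp => // n _ Sn _ _ _ _ Dp nDp.
  have top := DG_top n; have ntop := @DG_notop n.+1.
  case: (ltngtP m.+1 n.+1) => h.
  + by exfalso; apply: nDp; apply: (D_mono h top).
  + by exfalso; apply: ntop; apply: (D_mono h Dp).
  + by rewrite h.
- move=> Sm; exists (c m.+1).
  have I0 : I m.+1 (c m.+1) by apply: I_of; rewrite subrr; lra.
  have hD : forall r, D (X S) r (c m.+1) <-> D (G m.+1) r 0.
    by move=> r; have := DX_I r Sm I0; rewrite subrr.
  split.
  + by exists m.+1; split=> //; rewrite subrr; exact: G0.
  + exact: bad_top.
  + exact/hD/DG_top.
  + by move/hD; apply: DG_notop.
Qed.

Lemma inv_small (e : R) : 0 < e -> exists k : nat, k.+1%:R^-1 < e.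
Proof.
move=> e0; exists (Num.truncn e^-1).
have h := truncnS_gt e^-1.
rewrite -(ltf_pV2 (x := e)) ?invrK //; rewrite posrE ?invr_gt0 ?ltr0n //.
Qed.

Definition Ud (S : nat -> Prop) (k : nat) := [set x | exists n, [/\ S n, I n x,
  (exists a, K n.+1 a /\ `|x - c n - a| < k.+1%:R^-1) & x - c n <> s k]].

Lemma X_Gdelta S : Gdelta (X S).
Proof.
exists (Ud S); split.
- move=> k; apply: myopen_open => x [n [Sn In [a [Ka ha]] xs]].
  have [e2 e20 H2] := I_open In.
  have r10 : 0 < k.+1%:R^-1 - `|x - c n - a| by rewrite subr_gt0.
  have r30 : 0 < `|x - c n - s k| by rewrite normr_gt0 subr_eq0; apply/eqP.
  exists (Num.min e2 (Num.min (k.+1%:R^-1 - `|x - c n - a|) `|x - c n - s k|)).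
    by rewrite !lt_min e20 r10 r30.
  move=> y; rewrite !lt_min => /andP[y2 /andP[y1 y3]].
  exists n; split=> //; first exact: H2.
    exists a; split=> //.
    have := ler_normD (y - x) (x - c n - a).
    have -> : y - x + (x - c n - a) = y - c n - a by ring.
    move=> hle; apply: (le_lt_trans hle); move: y1; rewrite ltrBrDr //.
  move=> ys; move: y3; have -> : x - c n - s k = - (y - x) by rewrite -ys; ring.
  by rewrite normrN ltxx.
- apply/seteqP; split.
  + move=> x [n [Sn Gn]] k _; exists n; split=> //.
    * exact: I_of (G_bnd Gn).
    * by exists (x - c n); split; [case: Gn | rewrite subrr normr0 invr_gt0 ltr0n].
    * by case: Gn.
  + move=> x H.
    have [n0 [Sn0 In0 _ _]] := H 0%N Logic.I.
    have hk : forall k, exists a, K n0.+1 a /\ `|x - c n0 - a| < k.+1%:R^-1.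
      move=> k; have [nk [_ Ink ha _]] := H k Logic.I.
      by rewrite (I_uniq In0 Ink).
    exists n0; split=> //; split.
    * apply: K_closed => e e0; have [k hk'] := inv_small e0.
      have [a [Ka ha]] := hk k; exists a; split=> //.
      by rewrite distrC; apply: lt_trans hk'.
    * move=> j; have [nk [_ Ink _ hs]] := H j Logic.I.
      by rewrite (I_uniq In0 Ink).
Qed.


Lemma count_img (f : R -> R) (A : set R) : countable A -> countable (f @` A).
Proof. by move=> cA; apply: sub_countable (card_image_le f A) cA. Qed.

Lemma K_count m : countable (K m).
Proof.
elim: m => [|m IH]; first exact: countable1.
pose F (j : nat) : set R := if j is j'.+1 then T j' @` K m else [set 0].
have sub : K m.+1 `<=` \bigcup_(j in [set: nat]) F j.
  move=> x [->|[j [y Ky ->]]]; first by exists 0%N.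
  by exists j.+1 => //; exists y.
apply: sub_countable (subset_card_le sub) _.
apply: bigcup_countable => [|[|j] _]; first exact: card_lexx.
- exact: countable1.
- exact: count_img.
Qed.

Lemma X_count S : countable (X S).
Proof.
have sub : X S `<=` \bigcup_(n in [set: nat]) (aff (c n) 1 @` K n.+1).
  move=> x [n [_ [Kx _]]]; exists n => //; exists (x - c n) => //.
  by rewrite /aff mul1r addrC subrK.
apply: sub_countable (subset_card_le sub) _.
apply: bigcup_countable => [|n _]; first exact: card_lexx.
exact/count_img/K_count.
Qed.

Lemma X_inf S : S 1%N -> infinite_set (X S).
Proof.
move=> S1; have [Z [ZX Zinf _]] := bad_top (n := 0) S1 ltr01.
by apply: sub_infinite_set Zinf => z /ZX [].
Qed.

Definition qn (k : nat) : rat := odflt 0 (unpickle k).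
Definition Sr (r : R) (n : nat) := n = 1%N \/ exists2 k, n = k.+2 & ratr (qn k) < r.

Lemma Sr_pos r n : Sr r n -> (0 < n)%N.
Proof. by case=> [->|[k ->]]. Qed.

Lemma Sr1 r : Sr r 1%N. Proof. by left. Qed.

Lemma Sr_k r k : Sr r k.+2 <-> ratr (qn k) < r.
Proof.
split; last by move=> h; right; exists k.
by case=> // -[k' [->]].
Qed.

Lemma Sr_diff r t : r < t -> exists m, Sr t m.+1 /\ ~ Sr r m.+1.
Proof.
move=> rt; have [q] := rat_in_itvoo rt; rewrite in_itv /= => /andP[h1 h2].
exists (pickle q).+1; rewrite !Sr_k /qn pickleK /=; split => //.
by rewrite ltNge (ltW h1).
Qed.

Definition F (r : R) := X (Sr r).

Lemma F_key r m : Pm m.+1 (F r) <-> Sr r m.+1.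
Proof. exact/key/Sr_pos. Qed.

Lemma F_sep r t : r <> t -> exists m, ~ (Pm m.+1 (F r) <-> Pm m.+1 (F t)).
Proof.
move=> rt; have [lt|gt] : r < t \/ t < r.
  by case: (ltgtP r t) rt => // *; [left|right].
- have [m [h1 h2]] := Sr_diff lt; exists m; rewrite !F_key => h; tauto.
- have [m [h1 h2]] := Sr_diff gt; exists m; rewrite !F_key => h; tauto.
Qed.

Lemma F_inj : injective F.
Proof.
move=> r t e; apply: contrapT => rt; have [m hm] := F_sep rt.
by apply: hm; rewrite e.
Qed.

Lemma main_thm :
  exists H : set (set R),
    [/\ (forall A, H A -> countably_infinite A /\ Gdelta A),
        (H #= [set: R])%card &
        (forall A B, H A -> H B -> A <> B -> ~ homeomorphic_subspaces A B)].
Proof.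
exists (F @` [set: R]); split.
- move=> _ [r _ <-]; split; last exact: X_Gdelta.
  split; [exact: X_count | exact/X_inf/Sr1].
- exact: inj_card_eq (in2W F_inj).
- move=> _ _ [r _ <-] [t _ <-] neq /homeo_hom [f [g hfg]].
  have rt : r <> t by move=> e; apply: neq; rewrite e.
  have [m hm] := F_sep rt; apply: hm; split.
  + exact: hom_Pm hfg.
  + exact: hom_Pm (hom_sym hfg).
Qed.
End Gen.

Theorem theorem3 (R : realType) :
  exists H : set (set R),
    [/\ (forall A, H A -> countably_infinite A /\ Gdelta A),
        H #= [set: R] &
        (forall A B, H A -> H B -> A <> B -> ~ homeomorphic_subspaces A B)].
Proof. exact: main_thm. Qed.
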